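(* Let $(X_n)_{n\in\mathbb{N}}$ be a sequence of random matrices with $X_n\in M_n^{sa}$ having property $\mathcal{L}$. Then the sequence of probability measures $\mathbb{E} L_n^{\frac{1}{\sqrt{n}}X_n}$ is tight.
   Context: $M_n^{sa}$ denotes the space of $n\times n$ complex Hermitian matrices. For a random Hermitian $n\times n$ matrix $X$ with eigenvalues $\lambda_1\le\dots\le\lambda_n$, $L_n^X=\frac1n\sum_{i=1}^n\delta_{\lambda_i}$ and $\mathbb{E}L_n^X$ is the probability measure $A\mapsto\mathbb{E}(L_n^X(A))$. A sequence of random matrices $X_n\in M_n$ has property $\mathcal{L}$ if for every $\varepsilon>0$, \[ \lim_{M\to\infty}\limsup_{n\to\infty}\mathbb{P}\Big(\frac1{n^2}\sum_{i,j=1}^n|(X_n)_{ij}|^2\mathbf{1}_{\{|(X_n)_{ij}|>M\}}>\varepsilon\Big)=0. \] *)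

(* Defs.v *)
From HB Require Import structures.
From mathcomp Require Import all_boot all_order all_algebra.
From mathcomp Require Import all_classical all_reals all_analysis.
From mathcomp Require Import complex.
Import Order.TTheory GRing.Theory Num.Theory.
Import numFieldTopology.Exports numFieldNormedType.Exports.

Set Implicit Arguments.
Unset Strict Implicit.
Unset Printing Implicit Defensive.

Local Open Scope ring_scope.
Local Open Scope classical_set_scope.

Definition cabs (R : realType) (z : R[i]) : R := Normc.normc z.

Definition self_adjoint (R : realType) (n : nat) (A : 'M[R[i]]_n) : Prop :=
  forall i j : 'I_n, A j i = (A i j)^*%C.

(* The eigenvalues (with multiplicity) of a complex matrix, as a list of
   REAL numbers lambda_1, ..., lambda_n: a list s such that the characteristic
   polynomial of A equals prod_{x in s} ('X - x).  For a Hermitian matrix such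
   a list exists and is unique up to permutation; the choice among the
   permutations is irrelevant for the empirical measure below.
   (For non-Hermitian matrices the value is an arbitrary default, never used.) *)
Definition eigenseq (R : realType) (n : nat) (A : 'M[R[i]]_n) : seq R :=
  xget [::] [set s : seq R | char_poly A = \prod_(x <- s) ('X - ((x%:C)%C)%:P)].

Definition esd (R : realType) (n : nat) (A : 'M[R[i]]_n) (B : set R) : R :=
  (count (fun x => `[< B x >]) (eigenseq A))%:R / n%:R.

Definition normalized (R : realType) (n : nat) (A : 'M[R[i]]_n) : 'M[R[i]]_n :=
  (((Num.sqrt (n%:R : R))^-1)%:C)%C *: A.

Definition expected_esd d (T : measurableType d) (R : realType)
  (P : probability T R) (Y : forall n : nat, T -> 'M[R[i]]_n) (n : nat)
  (B : set R) : \bar R :=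
  (\int[P]_w (esd (Y n w) B)%:E)%E.

Definition tight (R : realType) (mu : nat -> set R -> \bar R) : Prop :=
  forall eps : R, 0 < eps ->
    exists K : set R, compact K /\
      forall n : nat, (0 < n)%N -> (mu n (~` K) < eps%:E)%E.

Definition tail_mass (R : realType) (n : nat) (A : 'M[R[i]]_n) (M : R) : R :=
  (n%:R ^+ 2)^-1 *
    \sum_(i < n) \sum_(j < n) (cabs (A i j) ^+ 2 * (M < cabs (A i j))%R%:R).

Definition property_L d (T : measurableType d) (R : realType)
  (P : probability T R) (X : forall n : nat, T -> 'M[R[i]]_n) : Prop :=
  forall eps : R, 0 < eps ->
    (fun M : R => limn_esup (fun n : nat =>
        P [set w | eps < tail_mass (X n w) M])) @ +oo --> (0 : \bar R).

Definition random_matrix_seq d (T : measurableType d) (R : realType)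
  (X : forall n : nat, T -> 'M[R[i]]_n) : Prop :=
  forall (n : nat) (i j : 'I_n),
    measurable_fun setT (fun w => @complex.Re R (X n w i j)) /\
    measurable_fun setT (fun w => @complex.Im R (X n w i j)).

(* Main.v *)
Require Import Defs.
From HB Require Import structures.
From mathcomp Require Import all_boot all_order all_algebra.
From mathcomp Require Import all_classical all_reals all_analysis.
From mathcomp Require Import complex.
Import Order.TTheory GRing.Theory Num.Theory.
Import numFieldTopology.Exports numFieldNormedType.Exports.
Local Open Scope ring_scope.
From mathcomp Require Import ring lra.
From mathcomp Require Import measurable_realfun.
Set Implicit Arguments. Unset Strict Implicit.
Lemma prod_seqN (F : comNzRingType) (I : Type) (s : seq I) (f : I -> F) :
  \prod_(x <- s) (- f x) = (-1) ^+ size s * \prod_(x <- s) f x.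
Proof.
elim: s => [|a s IH]; first by rewrite !big_nil expr0 mulr1.
by rewrite !big_cons IH exprS -/(size s) mulN1r !mulNr mulrCA.
Qed.

Lemma trace_sq (F : fieldType) n (A : 'M[F]_n) (s : seq F) :
  char_poly A = \prod_(x <- s) ('X - x%:P) ->
  \sum_(x <- s) x ^+ 2 = \tr (A *m A).
Proof.
move=> hA.
have hs : size s = n.
  by have := size_char_poly A; rewrite hA size_prod_XsubC => -[].
set A' := map_mx polyC A.
set N := 'X%:M + A'.
have hN : char_poly A \Po (- 'X) = (-1) ^+ n * \det N.
  rewrite /char_poly -det_map_mx /char_poly_mx map_mxB map_scalar_mx /= comp_polyX.
  have -> : map_mx (comp_poly (- 'X)) (map_mx polyC A) = A'.
    by apply/matrixP => i j; rewrite !mxE comp_polyC.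
  have -> : (- 'X)%:M - A' = - N by rewrite /N opprD raddfN.
  by rewrite -scaleN1r detZ.
have hN2 : \det N = \prod_(x <- s) ('X + x%:P).
  have : (-1) ^+ n * (char_poly A \Po (- 'X)) = \det N.
    by rewrite hN mulrA -exprD -signr_odd addnn odd_double expr0 mul1r.
  move=> <-; rewrite hA rmorph_prod /=.
  under eq_bigr do rewrite comp_polyB comp_polyX comp_polyC -opprD.
  by rewrite prod_seqN hs mulrA -exprD -signr_odd addnn odd_double expr0 mul1r.
have key : char_poly (A *m A) \Po 'X^2 = (\prod_(x <- s) ('X - (x ^+ 2)%:P)) \Po 'X^2.
  rewrite rmorph_prod /=.
  under [RHS]eq_bigr do rewrite comp_polyB comp_polyC comp_polyX rmorphXn /= subr_sqr.
  rewrite big_split /= -hN2 -hA /char_poly -det_mulmx -det_map_mx.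
  congr (\det _).
  rewrite /char_poly_mx map_mxB map_scalar_mx /= comp_polyX.
  have -> : map_mx (comp_poly 'X^2) (map_mx polyC (A *m A)) = A' *m A'.
    by rewrite -map_mxM; apply/matrixP => i j; rewrite !mxE comp_polyC.
  by rewrite /N -/A' mulmxDr !mulmxBl (scalar_mxC _ A') -scalar_mxM -expr2 addrA subrK.
clear hN hN2 N A'. move: A hA hs key. case: n => [|n] A hA hs key.
  by case: s hA hs key => // _ _ _; rewrite big_nil /mxtrace big_ord0.
have := congr1 (fun p : {poly F} => p`_(2 * n)) key.
rewrite /= !coef_comp_poly_Xn // dvdn_mulr // mulKn //.
set d := \row_(i < n.+1) (s`_i ^+ 2).
have hd : \prod_(x <- s) ('X - (x ^+ 2)%:P) = char_poly (diag_mx d).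
  rewrite char_poly_trig ?diag_mx_is_trig //.
  rewrite (big_nth 0) hs big_mkord; apply: eq_bigr => i _.
  by rewrite !mxE eqxx mulr1n.
rewrite hd.
have := char_poly_trace (A *m A) (ltn0Sn n); rewrite /= => ->.
have := char_poly_trace (diag_mx d) (ltn0Sn n); rewrite /= => ->.
move/oppr_inj => ->.
rewrite /mxtrace (big_nth 0) hs big_mkord; apply: eq_bigr => i _.
by rewrite !mxE eqxx mulr1n.
Qed.


Local Open Scope classical_set_scope.
Lemma mulcJ (R : realType) (z : R[i]) : z * (z^*)%C = ((cabs z ^+ 2)%:C)%C.
Proof.
case: z => a b; rewrite /cabs /= sqr_sqrtr ?addr_ge0 ?sqr_ge0 //.
apply/eqP; rewrite complex.eq_complex /=; apply/andP; split; apply/eqP.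
  by rewrite mulrN opprK !expr2.
by rewrite mulrN mulrC addNr.
Qed.

Lemma tr_herm (R : realType) n (A : 'M[R[i]]_n) : self_adjoint A ->
  \tr (A *m A) = ((\sum_i \sum_j cabs (A i j) ^+ 2)%:C)%C.
Proof.
move=> hA; rewrite /mxtrace rmorph_sum; apply: eq_bigr => i _.
rewrite mxE rmorph_sum; apply: eq_bigr => j _.
by rewrite (hA i j) mulcJ.
Qed.

Lemma sum_eig (R : realType) n (A : 'M[R[i]]_n) (s : seq R) : (0 < n)%N -> self_adjoint A ->
  char_poly (normalized A) = \prod_(x <- s) ('X - ((x%:C)%C)%:P) ->
  \sum_(x <- s) x ^+ 2 = (\sum_i \sum_j cabs (A i j) ^+ 2) / n%:R.
Proof.
move=> n0 hA hc.
have h := @trace_sq _ _ (normalized A) (map (real_complex R) s).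
rewrite big_map in h; have {h} := h hc.
rewrite big_map /normalized -scalemxAl -scalemxAr !mxtraceZ mulrA tr_herm //.
under eq_bigr do rewrite -rmorphXn.
rewrite -rmorph_sum -rmorphM.
rewrite -rmorphM => /(@complexI R) ->.
by rewrite -invfM -expr2 sqr_sqrtr ?ler0n // mulrC.
Qed.


Lemma count_sq (R : realType) (s : seq R) (C : R) : 0 <= C ->
  (count (fun x => `[< (~` `[-C, C]%classic) x >]) s)%:R * C ^+ 2 <= \sum_(x <- s) x ^+ 2.
Proof.
move=> C0; elim: s => [|x s IH]; first by rewrite big_nil mul0r.
rewrite big_cons /= natrD mulrDl lerD //.
case: asboolP => hx; last by rewrite mul0r sqr_ge0.
rewrite mul1r -[x ^+ 2]real_normK ?num_real // lerXn2r ?nnegrE ?normr_ge0 //.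
rewrite leNgt; apply/negP => hlt; apply: hx.
by rewrite /= in_itv /= -ler_norml ltW.
Qed.

Lemma eig_cases (R : realType) n (A : 'M[R[i]]_n) :
  char_poly A = \prod_(x <- eigenseq A) ('X - ((x%:C)%C)%:P) \/ eigenseq A = [::].
Proof.
rewrite /eigenseq; case: xgetP => [x -> Px|_]; [by left|by right].
Qed.

Lemma esd_le1 (R : realType) n (A : 'M[R[i]]_n) B : (0 < n)%N -> esd A B <= 1.
Proof.
move=> n0; rewrite /esd ler_pdivrMr ?ltr0n // mul1r ler_nat.
apply: leq_trans (count_size _ _) _.
case: (eig_cases A) => [h|->] //.
by have := size_char_poly A; rewrite h size_prod_XsubC => -[->].
Qed.

Lemma esd_le2 (R : realType) n (A : 'M[R[i]]_n) (C : R) : (0 < n)%N -> self_adjoint A -> 0 < C ->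
  esd (normalized A) (~` `[-C, C]%classic) <= (\sum_i \sum_j cabs (A i j) ^+ 2) / (n%:R ^+ 2 * C ^+ 2).
Proof.
move=> n0 hA C0; rewrite /esd.
have hC := count_sq (eigenseq (normalized A)) (ltW C0).
case: (eig_cases (normalized A)) => [h|h].
  rewrite (sum_eig n0 hA h) in hC.
  rewrite ler_pdivlMr ?mulr_gt0 ?exprn_gt0 ?ltr0n //.
  have nz : n%:R != 0 :> R by rewrite pnatr_eq0 -lt0n.
  move: hC; rewrite -(ler_pM2r (_ : 0 < n%:R)) ?ltr0n // divfK //.
  apply: le_trans; rewrite le_eqVlt; apply/orP; left; apply/eqP.
  by field.
rewrite h /= mul0r; apply: divr_ge0; last by apply: mulr_ge0; apply: sqr_ge0.
by apply: sumr_ge0 => i _; apply: sumr_ge0 => j _; apply: sqr_ge0.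
Qed.

Lemma cabs_ge0 (R : realType) (z : R[i]) : 0 <= cabs z.
Proof. by case: z => a b; rewrite /cabs /= sqrtr_ge0. Qed.

Lemma frob_tail (R : realType) n (A : 'M[R[i]]_n) (M : R) : (0 < n)%N -> 0 <= M ->
  (\sum_i \sum_j cabs (A i j) ^+ 2) / n%:R ^+ 2 <= M ^+ 2 + tail_mass A M.
Proof.
move=> n0 M0; rewrite /tail_mass ler_pdivrMr ?exprn_gt0 ?ltr0n //.
rewrite mulrDl (mulrAC (n%:R ^- 2)) mulVf ?expf_neq0 ?pnatr_eq0 -?lt0n // mul1r.
have -> : M ^+ 2 * n%:R ^+ 2 = \sum_(i < n) \sum_(j < n) M ^+ 2.
  by rewrite !sumr_const card_ord -mulrnA -[RHS]mulr_natr natrM -expr2.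
rewrite -big_split /=; apply: ler_sum => i _; rewrite -big_split /=; apply: ler_sum => j _.
case: ltrP => h; first by rewrite mulr1 lerDr sqr_ge0.
by rewrite mulr0 addr0 lerXn2r // nnegrE // cabs_ge0.
Qed.
Local Open Scope classical_set_scope.
Lemma cabsE (R : realType) (z : R[i]) : cabs z = Num.sqrt (complex.Re z ^+ 2 + complex.Im z ^+ 2).
Proof. by case: z. Qed.

Lemma meas_natr_bool d (T : measurableType d) (R : realType) (b : T -> bool) :
  measurable_fun setT b -> measurable_fun setT (fun w => (b w)%:R : R).
Proof.
move=> mb.
have mS : measurable [set w | b w].
  have := mb measurableT [set true] I; rewrite setTI.
  by congr measurable; apply/seteqP; split => w /=.
have -> : (fun w => (b w)%:R : R) = \1_[set w | b w].
  apply/funext => w; rewrite /indic; case: (boolP (b w)) => h; first by rewrite mem_set. by rewrite memNset //; apply/negP.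
exact/measurable_indicP.
Qed.

Lemma meas_cabs d (T : measurableType d) (R : realType) (X : forall n : nat, T -> 'M[R[i]]_n) n i j :
  random_matrix_seq X -> measurable_fun setT (fun w => cabs (X n w i j)).
Proof.
move=> /(_ n i j) [mre mim].
under eq_fun do rewrite cabsE.
change (measurable_fun setT (Num.sqrt \o (fun w => complex.Re (X n w i j) ^+ 2 + complex.Im (X n w i j) ^+ 2))).
apply: measurableT_comp.
  exact: continuous_measurable_fun (@sqrt_continuous R).
by apply: measurable_funD; apply: measurable_funX.
Qed.

Lemma meas_tail d (T : measurableType d) (R : realType) (X : forall n : nat, T -> 'M[R[i]]_n) n M :
  random_matrix_seq X -> measurable_fun setT (fun w => tail_mass (X n w) M).
Proof.
move=> hX; rewrite /tail_mass.
apply: measurable_funM; first exact: (@measurable_cst _ _ T _ setT (n%:R ^- 2 : R)). 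
pose F (i j : 'I_n) (w : T) := cabs (X n w i j) ^+ 2 * (M < cabs (X n w i j))%R%:R.
apply: (measurable_sum (index_enum 'I_n) (h := fun i w => \sum_(j < n) F i j w)) => i.
apply: (measurable_sum (index_enum 'I_n) (h := fun j w => F i j w)) => j.
rewrite /F.
apply: measurable_funM; first exact/measurable_funX/meas_cabs.
apply: meas_natr_bool.
apply: measurable_fun_ltr; first exact: measurable_cst.
exact: meas_cabs.
Qed.
Lemma esup_lt (R : realType) (u : (\bar R)^nat) (a : \bar R) :
  (limn_esup u < a)%E -> exists N, forall n, (N <= n)%N -> (u n < a)%E.
Proof.
rewrite limn_esup_lim (cvg_lim _ (@cvg_esups_inf R u)) //.
move/ereal_inf_lt => [_ [N _ <-] hN]; exists N => n Nn.
apply: le_lt_trans hN; apply: ereal_sup_ubound; exists n => //.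
Qed.

Lemma cvg0_lt (R : realType) (T : Type) (F : set_system T) (FF : Filter F) (f : T -> \bar R) (a : R) :
  f x @[x --> F] --> (0 : \bar R) -> 0 < a -> \forall x \near F, (f x < a%:E)%E.
Proof.
move=> hf a0; exact: (hf _ (@nbhs_open_ereal_lt R 0 (fun=> a) a0)).
Qed.

Lemma le_integral_nm d (T : measurableType d) (R : realType) (mu : {measure set T -> \bar R})
  (f1 f2 : T -> \bar R) : (forall x, (0 <= f1 x)%E) -> (forall x, (f1 x <= f2 x)%E) ->
  (\int[mu]_x f1 x <= \int[mu]_x f2 x)%E.
Proof.
move=> f10 f12; rewrite !ge0_integralTE //; last by move=> x; apply: le_trans (f12 x).
apply: ereal_sup_le => _ [h hf1 <-]; exists h => // x.
exact: le_trans (hf1 x) (f12 x).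
Qed.

Lemma entry_le_sum (R : realType) n (A : 'M[R[i]]_n) (i j : 'I_n) :
  cabs (A i j) <= \sum_i \sum_j cabs (A i j).
Proof.
have h0 : forall i, 0 <= \sum_j cabs (A i j) by move=> k; apply: sumr_ge0 => l _; exact: cabs_ge0.
rewrite (bigD1 i) //= (bigD1 j) //= -addrA lerDl addr_ge0 //.
  by apply: sumr_ge0 => l _; exact: cabs_ge0.
by apply: sumr_ge0 => k _; exact: h0.
Qed.

Lemma tail_mono (R : realType) n (A : 'M[R[i]]_n) (M M' : R) : M' <= M ->
  tail_mass A M <= tail_mass A M'.
Proof.
move=> hM; rewrite /tail_mass ler_wpM2l ?invr_ge0 ?sqr_ge0 //.
apply: ler_sum => i _; apply: ler_sum => j _.
apply: ler_wpM2l; first exact: sqr_ge0.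
case: (ltrP M (cabs (A i j))) => h //=; by rewrite (le_lt_trans hM h).
Qed.

Lemma tail_big (R : realType) n (A : 'M[R[i]]_n) (M : R) :
  \sum_i \sum_j cabs (A i j) <= M -> tail_mass A M = 0.
Proof.
move=> hM; rewrite /tail_mass; apply/eqP; rewrite mulf_eq0; apply/orP; right; apply/eqP.
apply: big1 => i _; apply: big1 => j _.
by rewrite ltNge (le_trans (entry_le_sum A i j) hM) /= mulr0.
Qed.

Lemma pointwise (R : realType) n (A : 'M[R[i]]_n) (M C : R) : (0 < n)%N -> self_adjoint A ->
  0 <= M -> 0 < C ->
  esd (normalized A) (~` `[-C, C]%classic) <= (1 < tail_mass A M)%R%:R + (M ^+ 2 + 1) / C ^+ 2.
Proof.
move=> n0 hA M0 C0.
have hc : 0 <= (M ^+ 2 + 1) / C ^+ 2 by rewrite divr_ge0 ?addr_ge0 ?sqr_ge0.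
case: ltrP => ht.
  by rewrite (le_trans (esd_le1 _ _ n0)) // lerDl.
rewrite add0r (le_trans (esd_le2 n0 hA C0)) //.
rewrite invfM mulrA ler_wpM2r ?invr_ge0 ?sqr_ge0 //.
by rewrite (le_trans (frob_tail A n0 M0)) // lerD2l.
Qed.

Section Main.
Variables (d : measure_display) (T : measurableType d) (R : realType) (P : probability T R)
  (X : forall n : nat, T -> 'M[R[i]]_n).
Hypothesis hX : random_matrix_seq X.

Definition Ev n M := [set w : T | 1 < tail_mass (X n w) M].

Lemma mEv n M : measurable (Ev n M).
Proof.
have := meas_tail n M hX measurableT (measurable_itv `]1%R, +oo[%R); rewrite setTI.
by congr measurable; apply/seteqP; split => w /=; rewrite in_itv /= andbT.
Qed.

Lemma Ev_mono n M M' : M' <= M -> Ev n M `<=` Ev n M'.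
Proof. by move=> hM w /= h; apply: lt_le_trans h (tail_mono _ hM). Qed.

Lemma PEv_mono n M M' : M' <= M -> (P (Ev n M) <= P (Ev n M'))%E.
Proof. by move=> hM; apply: le_measure; rewrite ?inE; [exact: mEv|exact: mEv|exact: Ev_mono]. Qed.

Lemma per_n n (e : R) : 0 < e -> exists Mn : R, forall M, Mn <= M -> (P (Ev n M) < e%:E)%E.
Proof.
move=> e0.
pose F k := Ev n k%:R.
have hF : \bigcap_k F k = set0.
  apply/seteqP; split => // w hw.
  pose k := (Num.Def.trunc (\sum_i \sum_j cabs (X n w i j))).+1.
  have := hw k I; rewrite /F /Ev /= tail_big ?ltr10 //.
  apply/ltW/truncnS_gt.
have hc := @nonincreasing_cvg_mu _ _ _ P F.
have := hc (le_lt_trans (probability_le1 P (mEv n 0%:R)) (ltry 1)) (fun k => mEv n k%:R).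
rewrite hF => /(_ measurable0) /=.
have hmono : {homo F : a b / (a <= b)%N >-> (b <= a)%O}.
  by move=> a b ab; apply/subsetPset; apply: Ev_mono; rewrite ler_nat.
move=> /(_ hmono); rewrite measure0 => /cvg0_lt /(_ e0) [N _ hN].
exists N%:R => M hM; apply: le_lt_trans (PEv_mono n hM) _.
exact: (hN N (leqnn N)).
Qed.
End Main.

Unset Implicit Arguments.
Local Close Scope classical_set_scope.

Theorem proposition2p7 (d : measure_display) (T : measurableType d)
  (R : realType) (P : probability T R)
  (X : forall n : nat, T -> 'M[R[i]]_n) :
  random_matrix_seq X ->
  (forall (n : nat) (w : T), self_adjoint (X n w)) ->
  property_L P X ->
  tight (expected_esd P (fun n w => normalized (X n w))).
Proof.
move=> hX hH hL eps eps0.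
have e2 : 0 < eps / 2 by rewrite divr_gt0.
have := cvg0_lt _ (hL 1 ltr01) e2.
move=> [M0 [M0r hM0]].
pose M1 := `|M0| + 1.
have hM1 : M0 < M1 by rewrite /M1 (le_lt_trans (ler_norm M0)) // ltrDl.
have [N hN] := esup_lt (hM0 _ hM1).
have small : forall K, exists M2 : R, forall n, (n < K)%N -> forall M, M2 <= M ->
    (P (Ev X n M) < (eps / 2)%:E)%E.
  elim=> [|K [M2 IH]]; first by exists 0.
  have [Mk hMk] := per_n P hX K e2.
  exists (Num.max M2 Mk) => n; rewrite ltnS leq_eqVlt => /orP [/eqP -> | nK] M hM.
    by apply: hMk; rewrite (le_trans _ hM) // le_max lexx orbT.
  by apply: IH => //; rewrite (le_trans _ hM) // le_max lexx.
have [M2 hM2] := small N.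
pose M := Num.max (Num.max M1 M2) 0.
have M0' : 0 <= M by rewrite le_max lexx orbT.
have hMn : forall n, (P (Ev X n M) < (eps / 2)%:E)%E.
  move=> n; case: (leqP N n) => hn.
    apply: le_lt_trans (PEv_mono P hX n _) (hN n hn).
    by rewrite !le_max lexx.
  by apply: hM2 => //; rewrite !le_max lexx !orbT.
pose C := 4 * (M ^+ 2 + 1) / eps + 1.
have hK : 0 < M ^+ 2 + 1 by rewrite ltr_pwDr ?ltr01 ?sqr_ge0.
have C1 : 1 <= C by rewrite /C lerDr divr_ge0 ?mulr_ge0 ?ltW.
have C0 : 0 < C by apply: lt_le_trans C1.
have hc : (M ^+ 2 + 1) / C ^+ 2 < eps / 2.
  rewrite ltr_pdivrMr ?exprn_gt0 //.
  have hCC : C <= C ^+ 2 by rewrite expr2 ler_peMl // ltW.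
  have : eps / 2 * C = 2 * (M ^+ 2 + 1) + eps / 2.
    by rewrite /C; field; rewrite gt_eqF.
  move=> hE; apply: lt_le_trans (ler_wpM2l (ltW e2) hCC); rewrite hE; lra.
exists `[-C, C]%classic; split; first exact: segment_compact.
move=> n n0; rewrite /expected_esd.
pose g := fun w => ((\1_(Ev X n M) w + (M ^+ 2 + 1) / C ^+ 2)%:E : \bar R).
apply: (le_lt_trans (le_integral_nm P (f2 := g) _ _)).
- by move=> w; rewrite lee_fin /esd divr_ge0 // ler0n.
- move=> w; rewrite lee_fin.
  have -> : \1_(Ev X n M) w = (1 < tail_mass (X n w) M)%R%:R.
    rewrite /indic; case: ltrP => h; first by rewrite mem_set.
    by rewrite memNset //= ; apply/negP; rewrite -leNgt.
  exact: pointwise n0 (hH n w) M0' C0.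
rewrite /g.
under eq_integral => w _ do rewrite EFinD.
rewrite ge0_integralD //.
- have hI : (\int[P]_x ((M ^+ 2 + 1) / C ^+ 2)%:E = ((M ^+ 2 + 1) / C ^+ 2)%:E)%E.
    have := integral_cst P measurableT ((M ^+ 2 + 1) / C ^+ 2)%:E; rewrite /cst => ->.
    by rewrite -[RHS]mule1; congr (_ * _)%E; exact: probability_setT.
  rewrite integral_indic ?setIT ?setTI; last exact: mEv.
  rewrite hI.
  apply: lt_le_trans (lteD (hMn n) (_ : ((M ^+ 2 + 1) / C ^+ 2)%:E < (eps / 2)%:E)%E) _.
  + by rewrite lte_fin.
  + by rewrite -EFinD lee_fin -splitr.
- exact: measurableT.
all: try (by move=> w _; rewrite lee_fin indic_ge0).
all: try (by move=> w _; rewrite lee_fin ltW // divr_gt0 // exprn_gt0).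
apply/measurable_EFinP; apply: measurable_indic; exact: mEv.
Qed.
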